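(* Let $d\in\mathbb{D}$ be such that, for every formula $\varphi$ of Hennessy–Milner logic, $(\mathbb{D},d)\models^c\varphi$ implies $(\mathbb{D},d)\models^a\varphi$. Then $d\in\max(\mathbb{D})$.
   Context: Fix a finite set $\mathrm{Act}$ of events. For a dcpo $D$, $K(D)$ denotes its compact elements; a bifinite (SFP) domain is an algebraic dcpo in which for each finite $F\subseteq K(D)$ iterated minimal-upper-bound sets are finite and in $K(D)$ and every upper bound of $F$ is above a minimal upper bound. Scott topology: sets $U={\uparrow}(U\cap K(D))$; Lawson topology generated by ${\uparrow}k\setminus{\uparrow}l$, $k,l\in K(D)$. Mixed powerdomain $\mathcal{M}(D)$: pairs $(L,U)$, $L$ Scott-closed, $U$ Lawson-closed upper, $L={\downarrow}(L\cap U)$, ordered by $L\subseteq L'$ and $U'\subseteq U$. $\mathbb{D}$ is the initial solution over bifinite domains of $\mathbb{D}\cong\prod_{\alpha\in\mathrm{Act}}\mathcal{M}(\mathbb{D})$, $d=((L^d_\alpha,U^d_\alpha))_\alpha$, viewed as a mixed transition system $(\mathbb{D},\mathbb{R}^a,\mathbb{R}^c)$ with $(d,\alpha,d')\in\mathbb{R}^a$ iff $d'\in L^d_\alpha$ and $(d,\alpha,d')\in\mathbb{R}^c$ iff $d'\in U^d_\alpha$. $\max(\mathbb{D})$ is the set of maximal elements. Hennessy–Milner logic: $\varphi::=tt\mid\neg\varphi\mid\langle\alpha\rangle\varphi\mid\varphi\wedge\varphi$. For $m\in\{a,c\}$ ($\neg a=c$, $\neg c=a$): $(\mathbb{D},d)\models^m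 tt$; $(\mathbb{D},d)\models^m\neg\varphi$ iff not $(\mathbb{D},d)\models^{\neg m}\varphi$; $(\mathbb{D},d)\models^m\langle\alpha\rangle\varphi$ iff $(\mathbb{D},d')\models^m\varphi$ for some $(d,\alpha,d')\in\mathbb{R}^m$; $\models^m\varphi\wedge\psi$ iff $\models^m\varphi$ and $\models^m\psi$. *)

(* Defs.v *)
From Stdlib Require Import List.
Import ListNotations.

Section Domains.
Variable D : Type.
Variable le : D -> D -> Prop.

Definition set_eq (A B : D -> Prop) : Prop := forall x, A x <-> B x.

Definition is_partial_order : Prop :=
  (forall x, le x x) /\
  (forall x y z, le x y -> le y z -> le x z) /\
  (forall x y, le x y -> le y x -> x = y).

Definition upper_bound (S : D -> Prop) (u : D) : Prop := forall x, S x -> le x u.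

Definition is_lub (S : D -> Prop) (s : D) : Prop :=
  upper_bound S s /\ forall u, upper_bound S u -> le s u.

Definition directed (S : D -> Prop) : Prop :=
  (exists x, S x) /\
  (forall x y, S x -> S y -> exists z, S z /\ le x z /\ le y z).

Definition is_dcpo : Prop := forall S, directed S -> exists s, is_lub S s.

Definition compact (k : D) : Prop :=
  forall S s, directed S -> is_lub S s -> le k s -> exists x, S x /\ le k x.

Definition is_algebraic : Prop :=
  is_dcpo /\
  forall x, directed (fun k => compact k /\ le k x) /\
            is_lub (fun k => compact k /\ le k x) x.

Definition finite_set (P : D -> Prop) : Prop :=
  exists l : list D, forall x, P x -> In x l.

Definition ub_list (F : list D) (u : D) : Prop := forall x, In x F -> le x u.

Definition mub (F : list D) (m : D) : Prop :=
  ub_list F m /\ forall u, ub_list F u -> le u m -> u = m.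

Definition mub_closure (F : list D) (x : D) : Prop :=
  forall C : D -> Prop,
    (forall y, In y F -> C y) ->
    (forall (G : list D) m, (forall y, In y G -> C y) -> mub G m -> C m) ->
    C x.

Definition is_bifinite : Prop :=
  is_algebraic /\
  forall F : list D, (forall x, In x F -> compact x) ->
    (forall u, ub_list F u -> exists m, mub F m /\ le m u) /\
    finite_set (mub_closure F) /\
    (forall x, mub_closure F x -> compact x).

Definition scott_open (U : D -> Prop) : Prop :=
  forall x, U x <-> exists k, compact k /\ U k /\ le k x.

Definition scott_closed (L : D -> Prop) : Prop := scott_open (fun x => ~ L x).

(* Lawson topology generated by the sets up k \ up l, k l in K(D):
   open sets are unions of finite intersections of generators *)
Definition lawson_basic (l : list (D * D)) (y : D) : Prop :=
  forall p, In p l -> le (fst p) y /\ ~ le (snd p) y.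

Definition lawson_open (O : D -> Prop) : Prop :=
  forall x, O x -> exists l : list (D * D),
    (forall p, In p l -> compact (fst p) /\ compact (snd p)) /\
    lawson_basic l x /\ (forall y, lawson_basic l y -> O y).

Definition lawson_closed (U : D -> Prop) : Prop := lawson_open (fun x => ~ U x).

Definition upper_set (U : D -> Prop) : Prop := forall x y, U x -> le x y -> U y.

Definition mixed_pair : Type := ((D -> Prop) * (D -> Prop))%type.

Definition is_mixed (p : mixed_pair) : Prop :=
  scott_closed (fst p) /\ lawson_closed (snd p) /\ upper_set (snd p) /\
  forall x, fst p x <-> exists y, fst p y /\ snd p y /\ le x y.

Definition mixed_le (p q : mixed_pair) : Prop :=
  (forall x, fst p x -> fst q x) /\ (forall x, snd q x -> snd p x).

Definition mixed_eq (p q : mixed_pair) : Prop :=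
  set_eq (fst p) (fst q) /\ set_eq (snd p) (snd q).

Definition scott_continuous (f : D -> D) : Prop :=
  (forall x y, le x y -> le (f x) (f y)) /\
  forall S s, directed S -> is_lub S s -> is_lub (fun y => exists x, S x /\ y = f x) (f s).

Definition scott_closure (A : D -> Prop) (x : D) : Prop :=
  forall C, scott_closed C -> (forall y, A y -> C y) -> C x.

Definition mixed_map (f : D -> D) (p : mixed_pair) : mixed_pair :=
  (scott_closure (fun y => exists x, fst p x /\ le y (f x)),
   fun y => exists x, snd p x /\ le (f x) y).

End Domains.

Definition finite_type (A : Type) : Prop := exists l : list A, forall a, In a l.

(* Initiality is expressed through the
   (equivalent, Pitts/Smyth-Plotkin) minimal-invariant property: the identity
   is the least fixed point of  f |-> phi^-1 o prod_alpha M(f) o phi  on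
   continuous self-maps. *)
Definition initial_solution (Act : Type) (D : Type) (le : D -> D -> Prop)
  (phi : D -> Act -> mixed_pair D) : Prop :=
  is_partial_order D le /\ is_bifinite D le /\
  (forall x a, is_mixed D le (phi x a)) /\
  (forall x y, le x y <-> forall a, mixed_le D (phi x a) (phi y a)) /\
  (forall t : Act -> mixed_pair D, (forall a, is_mixed D le (t a)) ->
     exists x, forall a, mixed_eq D (phi x a) (t a)) /\
  (forall f : D -> D, scott_continuous D le f ->
     (forall x a, mixed_eq D (phi (f x) a) (mixed_map D le f (phi x a))) ->
     forall x, le x (f x)).

Inductive hml (Act : Type) : Type :=
| HTrue : hml Act
| HNeg : hml Act -> hml Act
| HDia : Act -> hml Act -> hml Act
| HAnd : hml Act -> hml Act -> hml Act.
Arguments HTrue {Act}.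
Arguments HNeg {Act} _.
Arguments HDia {Act} _ _.
Arguments HAnd {Act} _ _.

Inductive mode : Type := ModeA | ModeC.
Definition neg_mode (m : mode) : mode :=
  match m with ModeA => ModeC | ModeC => ModeA end.

Definition trans {Act D : Type} (phi : D -> Act -> mixed_pair D)
  (m : mode) (d : D) (a : Act) (d' : D) : Prop :=
  match m with
  | ModeA => fst (phi d a) d'
  | ModeC => snd (phi d a) d'
  end.

Fixpoint sat {Act D : Type} (phi : D -> Act -> mixed_pair D)
  (m : mode) (d : D) (f : hml Act) : Prop :=
  match f with
  | HTrue => True
  | HNeg g => ~ sat phi (neg_mode m) d g
  | HDia a g => exists d', trans phi m d a d' /\ sat phi m d' g
  | HAnd g h => sat phi m d g /\ sat phi m d h
  end.

Definition maximal {D : Type} (le : D -> D -> Prop) (d : D) : Prop :=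
  forall y, le d y -> y = d.

(* Main.v *)
Require Import Defs.
From Stdlib Require Import List Classical ClassicalEpsilon FunctionalExtensionality PropExtensionality Lia.
Import ListNotations.

Definition incl_s {Y : Type} (F G : Y -> Prop) : Prop := forall y, F y -> G y.

Lemma set_ext_eq {Y : Type} (F G : Y -> Prop) : incl_s F G -> incl_s G F -> F = G.
Proof.
  intros H1 H2. apply functional_extensionality. intro y.
  apply propositional_extensionality. split; auto.
Qed.

Section ZornSec.
Variable Y : Type.
Variable P : (Y -> Prop) -> Prop.
Variable S0 : Y -> Prop.
Hypothesis HS0 : P S0.
Definition supc (C : (Y -> Prop) -> Prop) : Y -> Prop :=
  fun y => S0 y \/ exists F, C F /\ F y.
Definition is_chain (C : (Y -> Prop) -> Prop) : Prop :=
  forall F G, C F -> C G -> incl_s F G \/ incl_s G F.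
Hypothesis Hchain : forall C, is_chain C -> (forall F, C F -> P F /\ incl_s S0 F) -> P (supc C).

Definition good (F : Y -> Prop) := P F /\ incl_s S0 F.

Hypothesis Hnomax : forall M, good M -> exists F, P F /\ incl_s M F /\ ~ incl_s F M.

Definition gnext (M : Y -> Prop) : Y -> Prop :=
  epsilon (inhabits M) (fun F => good M -> P F /\ incl_s M F /\ ~ incl_s F M).

Lemma gnext_spec M : good M -> P (gnext M) /\ incl_s M (gnext M) /\ ~ incl_s (gnext M) M.
Proof.
  intro HM. unfold gnext.
  apply (epsilon_spec (inhabits M) (fun F => good M -> P F /\ incl_s M F /\ ~ incl_s F M)); auto.
  destruct (Hnomax M HM) as [F HF]. exists F. auto.
Qed.

Definition tower (M : Y -> Prop) : Prop :=
  forall Q : (Y -> Prop) -> Prop,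
    Q S0 -> (forall N, Q N -> Q (gnext N)) ->
    (forall C, is_chain C -> (forall N, C N -> Q N) -> Q (supc C)) -> Q M.

Lemma tower_S0 : tower S0.
Proof. intros Q H0 H1 H2. exact H0. Qed.
Lemma tower_next N : tower N -> tower (gnext N).
Proof. intros HN Q H0 H1 H2. apply H1. apply HN; auto. Qed.
Lemma tower_sup C : is_chain C -> (forall N, C N -> tower N) -> tower (supc C).
Proof.
  intros HC HN Q H0 H1 H2. apply H2; auto. intros N CN. apply HN; auto.
Qed.

Lemma tower_ind (Q : (Y -> Prop) -> Prop) :
  Q S0 -> (forall N, tower N -> Q N -> Q (gnext N)) ->
  (forall C, is_chain C -> (forall N, C N -> tower N /\ Q N) -> Q (supc C)) ->
  forall M, tower M -> Q M.
Proof.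
  intros H0 H1 H2 M HM.
  assert (tower M /\ Q M) as [_ ?]; auto.
  apply HM.
  - split; [apply tower_S0|auto].
  - intros N [TN QN]. split; [apply tower_next; auto| apply H1; auto].
  - intros C HC HN. split.
    + apply tower_sup; auto. intros N CN. apply HN; auto.
    + apply H2; auto.
Qed.

Lemma tower_good M : tower M -> good M.
Proof.
  apply tower_ind.
  - split; auto. intros y h; auto.
  - intros N _ GN. destruct (gnext_spec N GN) as [h1 [h2 h3]]. split; auto.
    intros y hy. apply h2. apply GN. auto.
  - intros C HC HN. split.
    + apply Hchain; auto. intros F CF. apply HN; auto.
    + intros y hy. left; auto.
Qed.

Lemma next_incl M : tower M -> incl_s M (gnext M).
Proof. intro T. apply (gnext_spec M (tower_good M T)). Qed.

Definition extreme (c : Y -> Prop) : Prop :=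
  forall x, tower x -> incl_s x c -> ~ incl_s c x -> incl_s (gnext x) c.

Lemma lemA c : tower c -> extreme c -> forall x, tower x -> incl_s x c \/ incl_s (gnext c) x.
Proof.
  intros Tc Ec. apply tower_ind.
  - left. apply (tower_good c Tc).
  - intros N TN [H|H].
    + destruct (classic (incl_s c N)) as [H'|H'].
      * assert (N = c) by (apply set_ext_eq; auto). subst. right. intros y h; auto.
      * left. apply Ec; auto.
    + right. intros y h. apply next_incl; auto.
  - intros C HC HN.
    destruct (classic (exists N, C N /\ incl_s (gnext c) N)) as [[N [CN HN']]|Hno].
    + right. intros y h. right. exists N. split; auto.
    + left. intros y [h|[N [CN h]]].
      * apply (tower_good c Tc); auto.
      * destruct (HN N CN) as [_ [h'|h']]; auto. exfalso; apply Hno; eauto.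
Qed.

Lemma all_extreme : forall c, tower c -> extreme c.
Proof.
  apply tower_ind.
  - intros x Tx H1 H2. exfalso. apply H2. apply (tower_good x Tx).
  - intros c0 Tc0 Ec0 x Tx H1 H2.
    destruct (lemA c0 Tc0 Ec0 x Tx) as [h|h].
    + destruct (classic (incl_s c0 x)) as [h'|h'].
      * assert (x = c0) by (apply set_ext_eq; auto). subst. intros y hy; auto.
      * intros y hy. apply (next_incl c0 Tc0). apply (Ec0 x Tx h h' y hy).
    + exfalso; auto.
  - intros C HC HN x Tx H1 H2.
    destruct (classic (exists c, C c /\ incl_s x c)) as [[c [Cc hc]]|Hno].
    + destruct (HN c Cc) as [Tc Ec].
      destruct (classic (incl_s c x)) as [h'|h'].
      * assert (x = c) by (apply set_ext_eq; auto). subst.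
        (* c strictly below supc C: find c' in C not below c *)
        destruct (classic (exists c', C c' /\ ~ incl_s c' c)) as [[c' [Cc' hc']]|Hno'].
        -- destruct (HN c' Cc') as [Tc' _].
           destruct (lemA c Tc Ec c' Tc') as [h|h]; [contradiction|].
           intros y hy. right. exists c'. split; auto.
        -- exfalso. apply H2. intros y [hy|[c' [Cc' hy]]].
           ++ apply (tower_good c Tc); auto.
           ++ apply NNPP. intro hn. apply Hno'. exists c'. split; [exact Cc'|].
              intro hi. apply hn. apply hi; auto.
      * intros y hy. right. exists c. split; [exact Cc|]. apply (Ec x Tx hc h' y hy).
    + exfalso. apply H2. intros y [hy|[c [Cc hy]]].
      * apply (tower_good x Tx); auto.
      * destruct (HN c Cc) as [Tc Ec].
        destruct (lemA c Tc Ec x Tx) as [h|h].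
        -- exfalso. apply Hno. eauto.
        -- apply h. apply next_incl; auto.
Qed.

Lemma tower_chain : is_chain tower.
Proof.
  intros F G TF TG.
  destruct (lemA G TG (all_extreme G TG) F TF) as [h|h]; [left; auto|].
  right. intros y hy. apply h. apply next_incl; auto.
Qed.

Lemma zorn_contra : False.
Proof.
  assert (T : tower (supc tower)) by (apply tower_sup; [apply tower_chain| auto]).
  destruct (gnext_spec _ (tower_good _ T)) as [_ [_ h3]].
  apply h3. intros y hy. right. exists (gnext (supc tower)). split; auto.
  apply tower_next; auto.
Qed.
End ZornSec.

Lemma zorn_sets (Y : Type) (P : (Y -> Prop) -> Prop) (S0 : Y -> Prop) :
  P S0 ->
  (forall C, is_chain Y C -> (forall F, C F -> P F /\ incl_s S0 F) -> P (supc Y S0 C)) ->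
  exists M, P M /\ incl_s S0 M /\ forall F, P F -> incl_s M F -> incl_s F M.
Proof.
  intros H0 Hc. apply NNPP. intro Hn.
  apply (zorn_contra Y P S0 H0 Hc). intros M [PM SM].
  apply NNPP. intro h. apply Hn. exists M. split; auto. split; auto.
  intros F PF MF. apply NNPP. intro h2. apply h. exists F. auto.
Qed.

Section Base.
Variable D : Type.
Variable le : D -> D -> Prop.
Hypothesis Hpo : is_partial_order D le.
Hypothesis Hbif : is_bifinite D le.

Lemma le_refl x : le x x. Proof. apply Hpo. Qed.
Lemma le_trans x y z : le x y -> le y z -> le x z. Proof. apply Hpo. Qed.
Lemma le_antisym x y : le x y -> le y x -> x = y. Proof. apply Hpo. Qed.

Lemma dcpo S : directed D le S -> exists s, is_lub D le S s.
Proof. apply Hbif. Qed.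
Lemma alg_dir x : directed D le (fun k => compact D le k /\ le k x).
Proof. apply Hbif. Qed.
Lemma alg_lub x : is_lub D le (fun k => compact D le k /\ le k x) x.
Proof. apply Hbif. Qed.

Lemma below_compacts x y : (forall k, compact D le k -> le k x -> le k y) -> le x y.
Proof.
  intro H. destruct (alg_lub x) as [_ H2]. apply H2. intros k [h1 h2]. auto.
Qed.

Lemma exists_compact_below x : exists k, compact D le k /\ le k x.
Proof. destruct (alg_dir x) as [[k hk] _]. eauto. Qed.

Lemma compact_dir k S s : compact D le k -> directed D le S -> is_lub D le S s -> le k s ->
  exists x, S x /\ le k x.
Proof. intros Hk; apply Hk. Qed.

Lemma sc_down C x y : scott_closed D le C -> C y -> le x y -> C x.
Proof.
  intros HC Cy Hxy. apply NNPP. intro Cx.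
  destruct (proj1 (HC x) Cx) as [k [Hk [Ck Hkx]]].
  apply (proj2 (HC y)); eauto. exists k. split; auto. split; auto. eapply le_trans; eauto.
Qed.

Lemma sc_dirsup C S s : scott_closed D le C -> directed D le S -> is_lub D le S s ->
  (forall x, S x -> C x) -> C s.
Proof.
  intros HC HS Hs HSC. apply NNPP. intro Cs.
  destruct (proj1 (HC s) Cs) as [k [Hk [Ck Hks]]].
  destruct (compact_dir k S s Hk HS Hs Hks) as [x [Sx Hkx]].
  apply Ck. eapply sc_down; eauto.
Qed.

Lemma sc_below y : scott_closed D le (fun z => le z y).
Proof.
  intro x. split.
  - intro H. apply NNPP. intro H'. apply H. apply below_compacts.
    intros k Hk Hkx. apply NNPP. intro hk. apply H'. exists k. repeat split; auto.
  - intros [k [Hk [h1 h2]]] h3. apply h1. eapply le_trans; eauto.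
Qed.

Lemma sc_notabove k : compact D le k -> scott_closed D le (fun z => ~ le k z).
Proof.
  intros Hk x. split.
  - intro H. exists k. split; auto. split; [intro h; apply h, le_refl|]. apply NNPP. auto.
  - intros [k' [Hk' [h1 h2]]] h3. apply h3. apply NNPP in h1. eapply le_trans; eauto.
Qed.

Definition sclo (A : D -> Prop) := scott_closure D le A.

Lemma sclo_incl A x : A x -> sclo A x.
Proof. intros Ax C HC HAC. auto. Qed.

Lemma sclo_min A C : scott_closed D le C -> (forall x, A x -> C x) -> forall x, sclo A x -> C x.
Proof. intros HC HAC x Hx. apply Hx; auto. Qed.

Lemma sclo_sc A : scott_closed D le (sclo A).
Proof.
  intro x. split.
  - intro H. unfold sclo, scott_closure in H.
    apply not_all_ex_not in H. destruct H as [C HC].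
    apply imply_to_and in HC. destruct HC as [HCc HC].
    apply imply_to_and in HC. destruct HC as [HAC HCx].
    destruct (proj1 (HCc x) HCx) as [k [Hk [Ck Hkx]]].
    exists k. split; auto. split; auto. intro Hcl. apply Ck. apply Hcl; auto.
  - intros [k [Hk [Hcl Hkx]]] Hx. apply Hcl. intros C HC HAC.
    apply (sc_down C k x HC); auto. apply Hx; auto.
Qed.

Lemma sclo_mono (A B : D -> Prop) : (forall x, A x -> B x) -> forall x, sclo A x -> sclo B x.
Proof.
  intros H x Hx. apply (sclo_min A (sclo B)); auto using sclo_sc.
  intros y Ay. apply sclo_incl; auto.
Qed.

Lemma sclo_down A x y : sclo A y -> le x y -> sclo A x.
Proof. intros; eapply sc_down; eauto using sclo_sc. Qed.

Definition fip (F : (D -> Prop) -> Prop) : Prop :=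
  forall l : list (D -> Prop), (forall A, In A l -> F A) -> exists z, forall A, In A l -> A z.

Lemma lawson_closed_up_gen c (bot : D) : compact D le bot -> (forall x, le bot x) ->
  lawson_closed D le (fun z => le c z).
Proof.
  intros Hb Hbot x Hx.
  assert (exists k, compact D le k /\ le k c /\ ~ le k x) as [k [Hk [Hkc Hkx]]].
  { apply NNPP. intro H. apply Hx. apply below_compacts. intros k Hk Hkc.
    apply NNPP. intro h. apply H. eauto. }
  exists [(bot, k)]. split.
  - intros p [<-|[]]. simpl. auto.
  - split.
    + intros p [<-|[]]. simpl. auto.
    + intros y Hy Hcy. destruct (Hy (bot, k)) as [_ h]; [left; auto|]. apply h.
      simpl. eapply le_trans; eauto.
Qed.

Lemma lc_inter A B : lawson_closed D le A -> lawson_closed D le B ->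
  lawson_closed D le (fun z => A z /\ B z).
Proof.
  intros HA HB x Hx. destruct (classic (A x)) as [Ax|Ax].
  - assert (~ B x) as Bx by tauto.
    destruct (HB x Bx) as [l [h1 [h2 h3]]]. exists l. split; auto. split; auto.
    intros y Hy [_ By]. apply (h3 y Hy By).
  - destruct (HA x Ax) as [l [h1 [h2 h3]]]. exists l. split; auto. split; auto.
    intros y Hy [Ay _]. apply (h3 y Hy Ay).
Qed.

Lemma lc_interall {I : Type} (Q : I -> Prop) (F : I -> D -> Prop) :
  (forall i, Q i -> lawson_closed D le (F i)) ->
  lawson_closed D le (fun z => forall i, Q i -> F i z).
Proof.
  intros HF x Hx. apply not_all_ex_not in Hx. destruct Hx as [i Hi].
  apply imply_to_and in Hi. destruct Hi as [Qi Fi].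
  destruct (HF i Qi x Fi) as [l [h1 [h2 h3]]]. exists l. split; auto. split; auto.
  intros y Hy H. apply (h3 y Hy). apply H; auto.
Qed.

Section Compactness.
Variable bot : D.
Hypothesis Hbot : forall x, le bot x.
Hypothesis Hbotc : compact D le bot.

Definition Pfam (G : (D -> Prop) -> Prop) : Prop :=
  (forall A, G A -> lawson_closed D le A) /\ fip G.

Lemma chain_list (F0 : (D -> Prop) -> Prop) (C : ((D -> Prop) -> Prop) -> Prop) :
  is_chain (D -> Prop) C -> (forall G, C G -> incl_s F0 G) ->
  forall l, (forall A, In A l -> supc (D -> Prop) F0 C A) ->
  (forall A, In A l -> F0 A) \/ exists G, C G /\ forall A, In A l -> G A.
Proof.
  intros HC HF0. induction l as [|A l IH]; intros Hl.
  - left. intros A [].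
  - destruct IH as [IH|[G [CG IH]]].
    + intros B HB. apply Hl. right; auto.
    + destruct (Hl A (or_introl eq_refl)) as [HA|[G [CG HA]]].
      * left. intros B [<-|HB]; auto.
      * right. exists G. split; auto. intros B [<-|HB]; auto. apply HF0; auto.
    + destruct (Hl A (or_introl eq_refl)) as [HA|[G' [CG' HA]]].
      * right. exists G. split; auto. intros B [<-|HB]; auto. apply HF0; auto.
      * destruct (HC G G' CG CG') as [h|h].
        -- right. exists G'. split; auto. intros B [<-|HB]; auto.
        -- right. exists G. split; auto. intros B [<-|HB]; auto.
Qed.

Lemma list_split_B (M : (D -> Prop) -> Prop) (B : D -> Prop) :
  forall l, (forall A, In A l -> M A \/ A = B) ->
  exists l', (forall A, In A l' -> M A) /\ forall A, In A l -> In A l' \/ A = B.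
Proof.
  induction l as [|A l IH]; intros Hl.
  - exists []. split; intros A [].
  - destruct IH as [l' [h1 h2]]. { intros; apply Hl; right; auto. }
    destruct (Hl A (or_introl eq_refl)) as [HA|HA].
    + exists (A :: l'). split.
      * intros A' [<-|h]; auto.
      * intros A' [<-|h]; [left; left; auto|]. destruct (h2 A' h); auto. left; right; auto.
    + exists l'. split; auto. intros A' [<-|h]; auto.
Qed.

Theorem lawson_compact (F : (D -> Prop) -> Prop) :
  (forall A, F A -> lawson_closed D le A) -> fip F -> exists z, forall A, F A -> A z.
Proof.
  intros HFc HFf.
  destruct (zorn_sets (D -> Prop) Pfam F) as [M [[HMc HMf] [HFM HMmax]]].
  { split; auto. }
  { intros C HC HCP. split.
    - intros A [HA|[G [CG HA]]]; auto. apply (proj1 (proj1 (HCP G CG))); auto.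
    - intros l Hl. destruct (chain_list F C HC (fun G CG => proj2 (HCP G CG)) l Hl)
        as [h|[G [CG h]]].
      + apply HFf; auto.
      + apply (proj2 (proj1 (HCP G CG))); auto. }
  assert (Hmax : forall B, lawson_closed D le B ->
            (forall l, (forall A, In A l -> M A) -> exists z, B z /\ forall A, In A l -> A z) ->
            M B).
  { intros B HB HBl.
    assert (incl_s (fun A => M A \/ A = B) M) as h.
    { apply HMmax.
      - split.
        + intros A [HA| ->]; [apply HMc; exact HA| exact HB].
        + intros l Hl. destruct (list_split_B M B l Hl) as [l' [h1 h2]].
          destruct (HBl l' h1) as [z [Bz Hz]]. exists z. intros A HA.
          destruct (h2 A HA) as [h| ->]; [apply Hz; exact h| exact Bz].
      - intros A HA; left; auto. }
    apply h. right; auto. }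
  assert (Hmax' : forall B, lawson_closed D le B -> ~ M B ->
            exists l, (forall A, In A l -> M A) /\ forall z, B z -> ~ (forall A, In A l -> A z)).
  { intros B HB HMB. apply NNPP. intro H. apply HMB. apply Hmax; auto.
    intros l Hl. apply NNPP. intro H2. apply H. exists l. split; auto.
    intros z Bz Hz. apply H2. eauto. }
  assert (Hlc : forall c, lawson_closed D le (fun z => le c z)).
  { intro c. apply (lawson_closed_up_gen c bot); auto. }
  assert (Mup : forall k k', M (fun z => le k' z) -> le k k' -> M (fun z => le k z)).
  { intros k k' Hk' Hkk. apply Hmax; auto. intros l Hl.
    destruct (HMf ((fun z => le k' z) :: l)) as [z Hz].
    { intros A [<-|HA]; auto. }
    exists z. split.
    - eapply le_trans; eauto. apply (Hz _ (or_introl eq_refl)).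
    - intros A HA. apply Hz. right; auto. }
  set (K := fun k => compact D le k /\ M (fun z => le k z)).
  assert (HK : directed D le K).
  { split.
    - exists bot. split; auto. apply Hmax; auto. intros l Hl.
      destruct (HMf l Hl) as [z Hz]. exists z. split; auto.
    - intros k1 k2 [Hk1 M1] [Hk2 M2].
      destruct Hbif as [_ Hb]. destruct (Hb [k1; k2]) as [Hub [[ms Hms] Hcpt]].
      { intros x [<-|[<-|[]]]; auto. }
      apply NNPP. intro Hno.
      assert (exists G, (forall A, In A G -> M A) /\
               forall m, In m ms -> mub D le [k1; k2] m -> forall z, le m z -> ~ (forall A, In A G -> A z))
        as [G [HG1 HG2]].
      { clear Hms. induction ms as [|m ms IH].
        - exists []. split; [intros A []|]. intros m [].
        - destruct IH as [G [HG1 HG2]].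
          destruct (classic (mub D le [k1; k2] m)) as [Hm|Hm].
          + assert (~ M (fun z => le m z)) as HMm.
            { intro HMm. apply Hno. exists m. split.
              - split; auto. apply Hcpt. intros C h1 h2. apply (h2 [k1; k2]); auto.
              - split; apply (proj1 Hm); simpl; auto. }
            destruct (Hmax' _ (Hlc m) HMm) as [l [Hl1 Hl2]].
            exists (l ++ G). split.
            * intros A HA. apply in_app_or in HA. destruct HA; auto.
            * intros m' [<-|Hm'] Hmub z Hz Hall.
              -- apply (Hl2 z Hz). intros A HA. apply Hall. apply in_or_app. auto.
              -- apply (HG2 m' Hm' Hmub z Hz). intros A HA. apply Hall. apply in_or_app. auto.
          + exists G. split; [exact HG1|]. intros m' [<-|Hm'] Hmub; [contradiction|]. apply HG2; auto. }
      destruct (HMf ((fun z => le k1 z) :: (fun z => le k2 z) :: G)) as [z Hz].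
      { intros A [<-|[<-|HA]]; auto. }
      destruct (Hub z) as [m [Hm Hmz]].
      { intros x [<-|[<-|[]]]; [apply (Hz _ (or_introl eq_refl))|apply (Hz _ (or_intror (or_introl eq_refl)))]. }
      refine (HG2 m _ Hm z Hmz _).
      + apply Hms. intros C h1 h2. apply (h2 [k1; k2]); auto.
      + intros A HA. apply Hz. right; right; auto. }
  destruct (dcpo K HK) as [x Hx].
  exists x. intros A FA. assert (MA : M A) by auto.
  apply NNPP. intro Ax.
  destruct (HMc A MA x Ax) as [ps [Hps1 [Hps2 Hps3]]].
  assert (exists G, (forall B, In B G -> M B) /\
            forall z, (forall B, In B G -> B z) -> lawson_basic D le ps z) as [G [HG1 HG2]].
  { clear Hps3. induction ps as [|[k l] ps IH].
    - exists []. split; [intros B []|]. intros z _ p [].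
    - destruct IH as [G [HG1 HG2]].
      + intros p Hp. apply Hps1. right; auto.
      + intros p Hp. apply Hps2. right; auto.
      + destruct (Hps1 (k, l) (or_introl eq_refl)) as [Hk Hl]; simpl in Hk, Hl.
        destruct (Hps2 (k, l) (or_introl eq_refl)) as [Hkx Hlx]; simpl in Hkx, Hlx.
        destruct (compact_dir k K x Hk HK Hx Hkx) as [kk [[Hkk MKk] Hkkk]].
        assert (MK : M (fun z => le k z)) by (eapply Mup; eauto).
        assert (NMl : ~ M (fun z => le l z)).
        { intro h. apply Hlx. apply (proj1 Hx). split; auto. }
        destruct (Hmax' _ (Hlc l) NMl) as [Gl [HGl1 HGl2]].
        exists ((fun z => le k z) :: Gl ++ G). split.
        * intros B [<-|HB]; auto. apply in_app_or in HB. destruct HB; auto.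
        * intros z Hz p [<-|Hp].
          -- simpl. split.
             ++ apply (Hz _ (or_introl eq_refl)).
             ++ intro hl. apply (HGl2 z hl). intros B HB. apply Hz. right. apply in_or_app; auto.
          -- apply HG2; auto. intros B HB. apply Hz. right. apply in_or_app; auto. }
  destruct (HMf (A :: G)) as [z Hz].
  { intros B [<-|HB]; auto. }
  apply (Hps3 z).
  - apply HG2. intros B HB. apply Hz. right; auto.
  - apply Hz. left; auto.
Qed.

Lemma fip_gen {I : Type} (A0 : D -> Prop) (Q : I -> Prop) (F : I -> D -> Prop) :
  (forall is : list I, (forall i, In i is -> Q i) -> exists z, A0 z /\ forall i, In i is -> F i z) ->
  fip (fun B => B = A0 \/ exists i, Q i /\ B = F i).
Proof.
  intros H l Hl.
  assert (exists is, (forall i, In i is -> Q i) /\ forall B, In B l -> B = A0 \/ exists i, In i is /\ B = F i)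
    as [is [h1 h2]].
  { clear H. induction l as [|B l IH].
    - exists []. split; intros ? [].
    - destruct IH as [is [h1 h2]]. { intros; apply Hl; right; auto. }
      destruct (Hl B (or_introl eq_refl)) as [-> |[i [Qi ->]]].
      + exists is. split; auto. intros B' [<-|HB']; auto.
      + exists (i :: is). split.
        * intros j [<-|Hj]; auto.
        * intros B' [<-|HB']; [right; exists i; split; [left|]; auto|].
          destruct (h2 B' HB') as [h|[j [Hj ->]]]; auto. right. exists j. split; [right|]; auto. }
  destruct (H is h1) as [z [Az Hz]]. exists z. intros B HB.
  destruct (h2 B HB) as [-> |[i [Hi ->]]]; auto.
Qed.

Corollary compact_gen {I : Type} (A0 : D -> Prop) (Q : I -> Prop) (F : I -> D -> Prop) :
  lawson_closed D le A0 -> (forall i, Q i -> lawson_closed D le (F i)) ->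
  (forall is : list I, (forall i, In i is -> Q i) -> exists z, A0 z /\ forall i, In i is -> F i z) ->
  exists z, A0 z /\ forall i, Q i -> F i z.
Proof.
  intros H0 HF Hfip.
  destruct (lawson_compact (fun B => B = A0 \/ exists i, Q i /\ B = F i)) as [z Hz].
  - intros B [-> |[i [Qi ->]]]; auto.
  - apply fip_gen; auto.
  - exists z. split.
    + apply Hz. left; auto.
    + intros i Qi. apply Hz. right. eauto.
Qed.
End Compactness.
End Base.

Section Main.
Variable Act : Type.
Variable D : Type.
Variable le : D -> D -> Prop.
Variable phi : D -> Act -> mixed_pair D.
Hypothesis Hsol : initial_solution Act D le phi.
Variable a0 : Act.

Lemma Hpo : is_partial_order D le. Proof. apply Hsol. Qed.
Lemma Hbif : is_bifinite D le. Proof. apply Hsol. Qed.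
Lemma Hmix x a : is_mixed D le (phi x a). Proof. apply Hsol. Qed.
Lemma Hemb x y : le x y <-> forall a, mixed_le D (phi x a) (phi y a). Proof. apply Hsol. Qed.


Lemma bcomp x y : (forall k, compact D le k -> le k x -> le k y) -> le x y.
Proof. apply (below_compacts D le Hbif). Qed.
Lemma scdown C x y : scott_closed D le C -> C y -> le x y -> C x.
Proof. apply (sc_down D le Hpo). Qed.
Lemma scdirsup C S s : scott_closed D le C -> directed D le S -> is_lub D le S s ->
  (forall x, S x -> C x) -> C s.
Proof. apply (sc_dirsup D le Hpo). Qed.
Lemma sclosc A : scott_closed D le (sclo D le A). Proof. apply (sclo_sc D le Hpo). Qed.
Lemma sclodown A x y : sclo D le A y -> le x y -> sclo D le A x.
Proof. apply (sclo_down D le Hpo). Qed.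
Lemma sclomono (A B : D -> Prop) : (forall x, A x -> B x) -> forall x, sclo D le A x -> sclo D le B x.
Proof. apply (sclo_mono D le Hpo). Qed.
Lemma ecb x : exists k, compact D le k /\ le k x. Proof. apply (exists_compact_below D le Hbif). Qed.
Lemma adir x : directed D le (fun k => compact D le k /\ le k x). Proof. apply (alg_dir D le Hbif). Qed.
Lemma alub x : is_lub D le (fun k => compact D le k /\ le k x) x. Proof. apply (alg_lub D le Hbif). Qed.
Lemma scbelow y : scott_closed D le (fun z => le z y). Proof. apply (sc_below D le Hpo Hbif). Qed.
Lemma scnot k : compact D le k -> scott_closed D le (fun z => ~ le k z). Proof. apply (sc_notabove D le Hpo). Qed.
Lemma ddcpo S : directed D le S -> exists s, is_lub D le S s. Proof. apply (dcpo D le Hbif). Qed.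

Definition L x a := fst (phi x a).
Definition U x a := snd (phi x a).

Lemma lrefl x : le x x. Proof. apply (le_refl D le Hpo). Qed.
Lemma ltrans x y z : le x y -> le y z -> le x z. Proof. apply (le_trans D le Hpo). Qed.
Lemma lanti x y : le x y -> le y x -> x = y. Proof. apply (le_antisym D le Hpo). Qed.

Lemma pair_eq (p q : mixed_pair D) : mixed_eq D p q -> p = q.
Proof.
  destruct p as [p1 p2], q as [q1 q2]. intros [h1 h2]; simpl in *.
  f_equal; apply set_ext_eq; intros y hy; apply h1 || apply h2; auto; apply h1; auto.
Qed.

Lemma surj_eq (t : Act -> mixed_pair D) : (forall a, is_mixed D le (t a)) ->
  exists x, forall a, phi x a = t a.
Proof.
  intro Ht. destruct Hsol as [_ [_ [_ [_ [Hs _]]]]]. destruct (Hs t Ht) as [x Hx].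
  exists x. intro a. apply pair_eq. auto.
Qed.

Lemma le_phi x y : le x y <-> forall a, (forall z, L x a z -> L y a z) /\ (forall z, U y a z -> U x a z).
Proof. rewrite Hemb. unfold mixed_le, L, U. tauto. Qed.

Lemma L_sc x a : scott_closed D le (L x a). Proof. apply (Hmix x a). Qed.
Lemma U_lc x a : lawson_closed D le (U x a). Proof. apply (Hmix x a). Qed.
Lemma U_up x a y z : U x a y -> le y z -> U x a z. Proof. intros; eapply (Hmix x a); eauto. Qed.
Lemma L_dec x a z : L x a z <-> exists y, L x a y /\ U x a y /\ le z y.
Proof. apply (Hmix x a). Qed.
Lemma L_down x a y z : L x a y -> le z y -> L x a z.
Proof. intros. eapply scdown; eauto using L_sc. Qed.

Lemma bot_exists : exists b, forall x, le b x.
Proof.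
  destruct (surj_eq (fun _ => ((fun _ => False), (fun _ => True)))) as [b Hb].
  - intro a. split; [|split; [|split]]; simpl.
    + intro x. split; [intros _|intros [k [_ [h _]]]; auto].
      destruct (ecb x) as [k [h1 h2]]. exists k. repeat split; auto.
    + intros x h. exfalso; apply h; exact I.
    + intros ? ? ? ?; exact I.
    + intro x. split; [intros []|intros [y [[] _]]].
  - exists b. intro x. apply le_phi. intro a. unfold L, U. rewrite Hb. simpl. split; auto.
    intros z []. 
Qed.

Definition botD : D := proj1_sig (constructive_indefinite_description _ bot_exists).
Lemma botD_le x : le botD x.
Proof. unfold botD. destruct (constructive_indefinite_description _ _). auto. Qed.
Lemma botD_compact : compact D le botD.
Proof. intros S s [[x Sx] _] _ _. exists x. split; auto. apply botD_le. Qed.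

Lemma notop x : exists k, compact D le k /\ ~ le k x.
Proof.
  apply NNPP. intro H.
  assert (Htop : forall z, le z x).
  { intro z. apply bcomp. intros k Hk _. apply NNPP. intro h. apply H. eauto. }
  destruct (surj_eq (fun _ => ((fun _ => True), (fun _ => True)))) as [z1 Hz1].
  { intro a. split; [|split; [|split]]; simpl.
    - intro y. split; [intro h; exfalso; auto|intros [k [_ [h _]]]; auto].
    - intros y h. exfalso; apply h; exact I.
    - intros ? ? ? ?; auto.
    - intro y. split; [intros _; exists y; split; auto; split; auto; apply lrefl|auto]. }
  destruct (surj_eq (fun _ => ((fun _ => False), (fun _ => False)))) as [z2 Hz2].
  { intro a. split; [|split; [|split]]; simpl.
    - intro y. split; [intros _|intros [k [_ [h _]]]; auto].
      destruct (ecb y) as [k [h1 h2]]. exists k. repeat split; auto.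
    - intros y _. exists []. split; [intros p []|]. split; [intros p []|]. intros; auto.
    - intros ? ? ? ?; auto.
    - intro y. split; [intros []|intros [w [[] _]]]. }
  assert (h1 := proj1 (proj1 (le_phi z1 x) (Htop z1) a0) x).
  assert (h2 := proj2 (proj1 (le_phi z2 x) (Htop z2) a0)).
  unfold L, U in h1, h2. rewrite Hz1 in h1. rewrite Hz2 in h2. simpl in h1, h2.
  destruct (proj1 (L_dec x a0 x) (h1 I)) as [y [_ [Uy _]]]. apply (h2 y). exact Uy.
Qed.

Lemma sc_lc C : scott_closed D le C -> lawson_closed D le C.
Proof.
  intros HC x Cx. destruct (proj1 (HC x) Cx) as [k [Hk [Ck Hkx]]].
  destruct (notop x) as [l [Hl Hlx]].
  exists [(k, l)]. split; [intros p [<-|[]]; simpl; auto|]. split.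
  - intros p [<-|[]]; simpl; auto.
  - intros y Hy Cy. destruct (Hy (k, l) (or_introl eq_refl)) as [h _]. simpl in h.
    apply Ck. eapply scdown; eauto.
Qed.

Lemma lc_up c : lawson_closed D le (fun z => le c z).
Proof. apply (lawson_closed_up_gen D le Hpo Hbif c botD botD_compact botD_le). Qed.

Lemma cgen {I : Type} (A0 : D -> Prop) (Q : I -> Prop) (F : I -> D -> Prop) :
  lawson_closed D le A0 -> (forall i, Q i -> lawson_closed D le (F i)) ->
  (forall is : list I, (forall i, In i is -> Q i) -> exists z, A0 z /\ forall i, In i is -> F i z) ->
  exists z, A0 z /\ forall i, Q i -> F i z.
Proof. apply (compact_gen D le Hpo Hbif botD botD_le botD_compact). Qed.

Lemma dir_list S : directed D le S -> forall xs, (forall x, In x xs -> S x) ->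
  exists z, S z /\ forall x, In x xs -> le x z.
Proof.
  intros [[x0 Sx0] HS]. induction xs as [|x xs IH]; intros H.
  - exists x0. split; auto. intros x [].
  - destruct IH as [z [Sz Hz]]. { intros; apply H; right; auto. }
    destruct (HS x z (H x (or_introl eq_refl)) Sz) as [w [Sw [h1 h2]]].
    exists w. split; auto. intros y [<-|Hy]; auto. eapply ltrans; eauto.
Qed.

Lemma lc_down_sc A : lawson_closed D le A -> scott_closed D le (fun x => exists y, A y /\ le x y).
Proof.
  intros HA x. split.
  - intro H. apply NNPP. intro H'. apply H.
    destruct (cgen A (fun k => compact D le k /\ le k x) (fun k z => le k z)) as [y [Ay Hy]]; auto.
    + intros; apply lc_up.
    + intros ks Hks.
      destruct (dir_list _ (adir x) ks Hks) as [k [[Hk Hkx] Hkk]].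
      apply NNPP. intro h. apply H'. exists k. split; auto. split; auto.
      intros [y [Ay Hky]]. apply h. exists y. split; auto. intros i Hi. eapply ltrans; eauto.
    + exists y. split; auto. apply bcomp. intros k Hk Hkx. apply Hy. auto.
  - intros [k [Hk [h1 h2]]] [y [Ay Hxy]]. apply h1. exists y. split; auto. eapply ltrans; eauto.
Qed.

Lemma cont_mono f x y : scott_continuous D le f -> le x y -> le (f x) (f y).
Proof. intros Hf; apply Hf. Qed.

Lemma cont_pre_sc f C : scott_continuous D le f -> scott_closed D le C ->
  scott_closed D le (fun x => C (f x)).
Proof.
  intros Hf HC x. split.
  - intro H. apply NNPP. intro H'. apply H.
    assert (Hl := proj2 Hf _ _ (adir x) (alub x)).
    eapply (scdirsup C); eauto.
    + split.
      * destruct (ecb x) as [k hk]. exists (f k). eauto.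
      * intros y1 y2 [x1 [S1 ->]] [x2 [S2 ->]].
        destruct (proj2 (adir x) x1 x2 S1 S2) as [z [Sz [h1 h2]]].
        exists (f z). split; eauto. split; apply cont_mono; auto.
    + intros y [k [[Hk Hkx] ->]]. apply NNPP. intro h. apply H'. exists k. repeat split; auto.
  - intros [k [Hk [h1 h2]]] h3. apply h1. eapply scdown; eauto. apply cont_mono; auto.
Qed.

Definition supL (S : D -> Prop) a := sclo D le (fun y => exists x, S x /\ L x a y).
Definition supU (S : D -> Prop) a := fun y => forall x, S x -> U x a y.

Lemma sup_mixed S a : directed D le S -> is_mixed D le (supL S a, supU S a).
Proof.
  intro HS. split; [|split; [|split]]; simpl.
  - apply sclosc.
  - apply lc_interall. intros; apply U_lc.
  - intros y z Hy Hyz x Sx. eapply U_up; eauto.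
  - assert (step1 : forall x0, S x0 -> forall z, supL S a z ->
             exists y, (supL S a y /\ U x0 a y) /\ le z y).
    { intros x0 Sx0. apply (sclo_min D le (fun y => exists x, S x /\ L x a y)
        (fun z => exists y, (supL S a y /\ U x0 a y) /\ le z y)).
      - apply lc_down_sc. apply lc_inter; [apply sc_lc, sclosc|apply U_lc].
      - intros z [x [Sx Lz]].
        destruct (proj2 HS x x0 Sx Sx0) as [x' [Sx' [h1 h2]]].
        destruct (proj1 (le_phi x x') h1 a) as [hL _].
        destruct (proj1 (L_dec x' a z) (hL z Lz)) as [y [Ly [Uy hzy]]].
        exists y. split; auto. split.
        + apply sclo_incl. eauto.
        + apply (proj2 (proj1 (le_phi x0 x') h2 a)). auto. }
    intro z. split.
    + intro Hz.
      destruct (cgen (fun y => supL S a y /\ le z y) S (fun x => U x a)) as [y [[h1 h2] h3]].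
      * apply lc_inter; [apply sc_lc, sclosc|apply lc_up].
      * intros; apply U_lc.
      * intros xs Hxs. destruct (dir_list S HS xs Hxs) as [x [Sx Hx]].
        destruct (step1 x Sx z Hz) as [y [[h1 h2] h3]]. exists y. split; auto.
        intros i Hi. apply (proj2 (proj1 (le_phi i x) (Hx i Hi) a)). auto.
      * exists y. auto.
    + intros [y [h1 [_ h2]]]. eapply sclodown; eauto.
Qed.

Lemma sup_phi S s : directed D le S -> is_lub D le S s -> forall a, phi s a = (supL S a, supU S a).
Proof.
  intros HS Hs. destruct (surj_eq (fun a => (supL S a, supU S a))) as [w Hw].
  { intro a. apply sup_mixed; auto. }
  assert (Hub : upper_bound D le S w).
  { intros x Sx. apply le_phi. intro a. unfold L, U. rewrite Hw. simpl. split.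
    - intros z hz. apply sclo_incl. exists x. auto.
    - intros z hz. apply hz. auto. }
  assert (Hle : le w s).
  { apply le_phi. intro a. unfold L at 1, U at 2. rewrite Hw. simpl. split.
    - apply (sclo_min D le). apply L_sc. intros y [x [Sx Ly]].
      apply (proj1 (proj1 (le_phi x s) (proj1 Hs x Sx) a)). auto.
    - intros z hz x Sx. apply (proj2 (proj1 (le_phi x s) (proj1 Hs x Sx) a)). auto. }
  assert (w = s) as <- by (apply lanti; auto; apply (proj2 Hs); auto).
  auto.
Qed.
Definition Mf (f : D -> D) (p : mixed_pair D) := mixed_map D le f p.

Lemma Mf_mixed f p : scott_continuous D le f -> is_mixed D le p -> is_mixed D le (Mf f p).
Proof.
  intros Hf [HL [HU [HUu HLd]]].
  assert (Hsnd : lawson_closed D le (snd (Mf f p))).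
  { intros y Hy. simpl in Hy.
    assert (exists ks, (forall k, In k ks -> compact D le k /\ ~ le k y) /\
              forall u, snd p u -> exists k, In k ks /\ le k (f u)) as [ks [Hks1 Hks2]].
    { apply NNPP. intro Hno.
      destruct (cgen (snd p) (fun k => compact D le k /\ ~ le k y) (fun k u => ~ le k (f u)))
        as [u [Uu Hu]]; auto.
      - intros k [Hk _]. apply sc_lc. apply (cont_pre_sc f (fun z => ~ le k z)); auto. apply scnot; auto.
      - intros ks Hks. apply NNPP. intro h. apply Hno. exists ks. split; auto.
        intros u Uu. apply NNPP. intro h2. apply h. exists u. split; auto.
        intros k Hk hk. apply h2. eauto.
      - apply Hy. exists u. split; auto. apply bcomp. intros k Hk Hku.
        apply NNPP. intro h. apply (Hu k); auto. }
    exists (map (fun k => (botD, k)) ks). split; [|split].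
    - intros p' Hp. apply in_map_iff in Hp. destruct Hp as [k [<- Hk]]. simpl.
      split; [apply botD_compact|apply Hks1; auto].
    - intros p' Hp. apply in_map_iff in Hp. destruct Hp as [k [<- Hk]]. simpl.
      split; [apply botD_le|apply Hks1; auto].
    - intros z Hz [u [Uu Hfu]]. destruct (Hks2 u Uu) as [k [Hk Hkf]].
      destruct (Hz (botD, k)) as [_ h]. { apply in_map_iff. eauto. }
      apply h. simpl. eapply ltrans; eauto. }
  split; [|split; [|split]].
  - apply sclosc.
  - exact Hsnd.
  - intros y z [u [Uu Hu]] Hyz. exists u. split; auto. eapply ltrans; eauto.
  - intro z. split.
    + intro Hz.
      assert (H : exists y, (fst (Mf f p) y /\ snd (Mf f p) y) /\ le z y).
      { revert z Hz. apply (sclo_min D le _ (fun z => exists y, (fst (Mf f p) y /\ snd (Mf f p) y) /\ le z y)).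
        * apply lc_down_sc. apply lc_inter; auto. apply sc_lc, sclosc.
        * intros y [x [Lx Hyx]]. destruct (proj1 (HLd x) Lx) as [x' [Lx' [Ux' Hxx']]].
          exists (f x'). split; [split|].
          -- apply sclo_incl. exists x'. split; auto. apply lrefl.
          -- exists x'. split; auto. apply lrefl.
          -- eapply ltrans; eauto. apply cont_mono; auto. }
      destruct H as [y [[h1 h2] h3]]. exists y. repeat split; auto.
    + intros [y [h1 [_ h2]]]. eapply sclodown; [exact h1|exact h2].
Qed.

Definition Psi (f : D -> D) (x : D) : D :=
  epsilon (inhabits x) (fun z => forall a, phi z a = Mf f (phi x a)).

Lemma Psi_spec f x : scott_continuous D le f -> forall a, phi (Psi f x) a = Mf f (phi x a).
Proof.
  intro Hf. unfold Psi. apply (epsilon_spec (inhabits x) (fun z => forall a, phi z a = Mf f (phi x a))).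
  apply surj_eq. intro a. apply Mf_mixed; auto. apply Hmix.
Qed.

Lemma L_Psi f x a : scott_continuous D le f ->
  L (Psi f x) a = sclo D le (fun y => exists l, L x a l /\ le y (f l)).
Proof. intro Hf. unfold L. rewrite Psi_spec; auto. Qed.
Lemma U_Psi f x a : scott_continuous D le f ->
  U (Psi f x) a = (fun y => exists u, U x a u /\ le (f u) y).
Proof. intro Hf. unfold U. rewrite Psi_spec; auto. Qed.

Lemma Psi_mono f x y : scott_continuous D le f -> le x y -> le (Psi f x) (Psi f y).
Proof.
  intros Hf Hxy. apply le_phi. intro a. rewrite !L_Psi, !U_Psi; auto.
  destruct (proj1 (le_phi x y) Hxy a) as [hL hU]. split.
  - apply sclomono. intros z [l [Ll h]]. eauto.
  - intros z [u [Uu h]]. eauto.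
Qed.

Lemma Psi_mono_f f g x : scott_continuous D le f -> scott_continuous D le g ->
  (forall z, le (f z) (g z)) -> le (Psi f x) (Psi g x).
Proof.
  intros Hf Hg Hfg. apply le_phi. intro a. rewrite !L_Psi, !U_Psi; auto. split.
  - apply sclomono. intros z [l [Ll h]]. exists l. split; auto. eapply ltrans; eauto.
  - intros z [u [Uu h]]. exists u. split; auto. eapply ltrans; eauto.
Qed.

Lemma Psi_below f x : scott_continuous D le f -> (forall z, le (f z) z) -> le (Psi f x) x.
Proof.
  intros Hf Hfz. apply le_phi. intro a. rewrite L_Psi, U_Psi; auto. split.
  - apply (sclo_min D le). apply L_sc. intros z [l [Ll h]]. eapply L_down; eauto. eapply ltrans; eauto.
  - intros z Uz. exists z. split; auto.
Qed.

Lemma img_dir f S : (forall x y, le x y -> le (f x) (f y)) -> directed D le S ->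
  directed D le (fun y => exists x, S x /\ y = f x).
Proof.
  intros Hm [[x0 Sx0] HS]. split.
  - exists (f x0). eauto.
  - intros y1 y2 [x1 [S1 ->]] [x2 [S2 ->]]. destruct (HS x1 x2 S1 S2) as [z [Sz [h1 h2]]].
    exists (f z). split; eauto.
Qed.

Lemma Psi_cont f : scott_continuous D le f -> scott_continuous D le (Psi f).
Proof.
  intro Hf. split.
  - intros; apply Psi_mono; auto.
  - intros S s HS Hs.
    set (T := fun y => exists x, S x /\ y = Psi f x).
    assert (HT : directed D le T) by (apply img_dir; auto; intros; apply Psi_mono; auto).
    destruct (ddcpo T HT) as [t Ht].
    assert (Hts : le t (Psi f s)).
    { apply (proj2 Ht). intros y [x [Sx ->]]. apply Psi_mono; auto. apply (proj1 Hs); auto. }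
    assert (Hst : le (Psi f s) t).
    { apply le_phi. intro a. unfold L at 2, U at 1. rewrite (sup_phi T t HT Ht a). simpl.
      rewrite L_Psi, U_Psi; auto. split.
      - apply (sclo_min D le). apply sclosc. intros y [x [Lx Hy]].
        eapply sclodown; [|exact Hy].
        unfold L in Lx. rewrite (sup_phi S s HS Hs a) in Lx. simpl in Lx.
        clear Hy. revert x Lx. apply (sclo_min D le _ (fun x => supL T a (f x))).
        + apply cont_pre_sc; auto. apply sclosc.
        + intros x [x' [Sx' Lx]]. apply sclo_incl. exists (Psi f x'). split; [exists x'; auto|].
          rewrite L_Psi; auto. apply sclo_incl. exists x. split; auto. apply lrefl.
      - intros y Hy.
        destruct (cgen (fun u => le (f u) y) S (fun x => U x a)) as [u [Hu1 Hu2]].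
        + apply sc_lc. apply (cont_pre_sc f (fun z => le z y)); auto. apply scbelow.
        + intros; apply U_lc.
        + intros xs Hxs. destruct (dir_list S HS xs Hxs) as [x [Sx Hx]].
          assert (Hy' := Hy (Psi f x) (ex_intro _ x (conj Sx eq_refl))).
          rewrite U_Psi in Hy'; auto. destruct Hy' as [u [Uu Hfu]].
          exists u. split; auto. intros i Hi. apply (proj2 (proj1 (le_phi i x) (Hx i Hi) a)). auto.
        + exists u. split; auto. unfold U. rewrite (sup_phi S s HS Hs a). simpl. exact Hu2. }
    assert (t = Psi f s) as <- by (apply lanti; auto).
    exact Ht.
Qed.

Fixpoint pi (n : nat) : D -> D :=
  match n with
  | O => fun _ => botD
  | S n => Psi (pi n)
  end.

Lemma pi_cont n : scott_continuous D le (pi n).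
Proof.
  induction n as [|n IH]; simpl.
  - split.
    + intros; apply lrefl.
    + intros S s [[x Sx] _] _. split.
      * intros y [x' [_ ->]]. apply lrefl.
      * intros u Hu. apply Hu. eauto.
  - apply Psi_cont; auto.
Qed.

Lemma pi_succ n x : le (pi n x) (pi (S n) x).
Proof.
  revert x. induction n as [|n IH]; intro x.
  - apply botD_le.
  - simpl. apply Psi_mono_f; auto using pi_cont. apply (pi_cont (S n)).
Qed.

Lemma pi_le_n n m x : n <= m -> le (pi n x) (pi m x).
Proof.
  induction 1.
  - apply lrefl.
  - eapply ltrans; eauto. apply pi_succ.
Qed.

Lemma pi_below n x : le (pi n x) x.
Proof.
  revert x. induction n as [|n IH]; intro x.
  - apply botD_le.
  - simpl. apply Psi_below; auto using pi_cont.
Qed.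

Lemma chain_dir (c : nat -> D) : (forall n, le (c n) (c (S n))) -> directed D le (fun y => exists n, y = c n).
Proof.
  intro Hc. assert (Hm : forall n m, n <= m -> le (c n) (c m)).
  { intros n m H. induction H; [apply lrefl|eapply ltrans; eauto]. }
  split.
  - exists (c 0). eauto.
  - intros y1 y2 [n1 ->] [n2 ->]. exists (c (max n1 n2)). split; eauto.
    split; apply Hm; lia.
Qed.

Definition fstar (x : D) : D := epsilon (inhabits x) (is_lub D le (fun y => exists n, y = pi n x)).

Lemma fstar_lub x : is_lub D le (fun y => exists n, y = pi n x) (fstar x).
Proof.
  unfold fstar. apply (epsilon_spec (inhabits x) (is_lub D le (fun y => exists n, y = pi n x))).
  apply ddcpo. apply chain_dir. intro; apply pi_succ.
Qed.

Lemma pi_fstar n x : le (pi n x) (fstar x).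
Proof. apply (proj1 (fstar_lub x)). eauto. Qed.

Lemma fstar_cont : scott_continuous D le fstar.
Proof.
  assert (Hm : forall x y, le x y -> le (fstar x) (fstar y)).
  { intros x y Hxy. apply (proj2 (fstar_lub x)). intros z [n ->].
    eapply ltrans; [|apply pi_fstar]. apply cont_mono; auto. apply pi_cont. }
  split; auto.
  intros S s HS Hs. split.
  - intros y [x [Sx ->]]. apply Hm. apply (proj1 Hs); auto.
  - intros u Hu. apply (proj2 (fstar_lub s)). intros z [n ->].
    assert (Hl := proj2 (pi_cont n) S s HS Hs). apply (proj2 Hl).
    intros y [x [Sx ->]]. eapply ltrans; [apply pi_fstar|]. apply Hu. eauto.
Qed.

Lemma list_max (ns : list nat) : exists N, forall n, In n ns -> n <= N.
Proof.
  induction ns as [|n ns [N HN]].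
  - exists 0. intros n [].
  - exists (max n N). intros m [<-|Hm]; [lia|]. specialize (HN m Hm). lia.
Qed.

Lemma fstar_fix x a : mixed_eq D (phi (fstar x) a) (mixed_map D le fstar (phi x a)).
Proof.
  set (T := fun y => exists n, y = pi (S n) x).
  assert (HT : directed D le T).
  { apply (chain_dir (fun n => pi (S n) x)). intro; apply pi_succ. }
  assert (HlT : is_lub D le T (fstar x)).
  { split.
    - intros y [n ->]. apply pi_fstar.
    - intros u Hu. apply (proj2 (fstar_lub x)). intros y [n ->].
      eapply ltrans; [apply pi_succ|]. apply Hu. exists n; auto. }
  rewrite (sup_phi T (fstar x) HT HlT a). split; simpl.
  - intro y. split.
    + apply (sclo_min D le). apply sclosc. intros z [w [[n ->] Lz]].
      change (L (Psi (pi n) x) a z) in Lz.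
      rewrite (L_Psi (pi n) x a (pi_cont n)) in Lz. revert z Lz.
      apply sclomono. intros z [l [Ll h]]. exists l. split; auto. eapply ltrans; eauto. apply pi_fstar.
    + apply (sclo_min D le). apply sclosc. intros z [l [Ll Hz]].
      eapply sclodown; [|exact Hz].
      apply (scdirsup _ (fun y => exists n, y = pi n l)); [apply sclosc| |apply fstar_lub|].
      * apply chain_dir. intro; apply pi_succ.
      * intros w [n ->]. apply sclo_incl. exists (pi (S n) x). split; [exists n; auto|].
        change (L (Psi (pi n) x) a (pi n l)).
        rewrite (L_Psi (pi n) x a (pi_cont n)). apply sclo_incl. exists l. split; auto. apply lrefl.
  - intro y. split.
    + intro Hy.
      destruct (cgen (U x a) (fun _ : nat => True) (fun n u => le (pi n u) y)) as [u [Uu Hu]].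
      * apply U_lc.
      * intros n _. apply sc_lc. apply (cont_pre_sc (pi n) (fun z => le z y)); [apply pi_cont|apply scbelow].
      * intros ns _. destruct (list_max ns) as [N HN].
        assert (Hy' := Hy (pi (S N) x) (ex_intro _ N eq_refl)).
        simpl in Hy'. fold (U (Psi (pi N) x) a) in Hy'. rewrite U_Psi in Hy'; [|apply pi_cont].
        destruct Hy' as [u [Uu Hu]]. exists u. split; auto. intros n Hn.
        eapply ltrans; [|exact Hu]. apply pi_le_n; auto.
      * exists u. split; auto. apply (proj2 (fstar_lub u)). intros z [n ->]. auto.
    + intros [u [Uu Hu]] w [n ->]. simpl. fold (U (Psi (pi n) x) a).
      rewrite U_Psi; [|apply pi_cont]. exists u. split; auto. eapply ltrans; [apply pi_fstar|exact Hu].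
Qed.

Lemma le_fstar x : le x (fstar x).
Proof.
  destruct Hsol as [_ [_ [_ [_ [_ Hmin]]]]]. apply Hmin.
  - apply fstar_cont.
  - intros; apply fstar_fix.
Qed.
Lemma sat_mono (f : hml Act) : forall x z, le x z ->
  (sat phi ModeA x f -> sat phi ModeA z f) /\ (sat phi ModeC z f -> sat phi ModeC x f).
Proof.
  induction f as [|g IH|b g IH|g IHg h IHh]; intros x z Hxz; simpl.
  - split; auto.
  - split; intros h1 h2; apply h1; apply (IH x z Hxz); auto.
  - destruct (proj1 (le_phi x z) Hxz b) as [hL hU]. split.
    + intros [d' [h1 h2]]. exists d'. split; auto. apply hL. exact h1.
    + intros [d' [h1 h2]]. exists d'. split; auto. apply hU. exact h1.
  - destruct (IHg x z Hxz), (IHh x z Hxz). split; intros [h1 h2]; split; auto.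
Qed.

Lemma sat_cons (f : hml Act) : forall x, sat phi ModeA x f -> sat phi ModeC x f.
Proof.
  induction f as [|g IH|b g IH|g IHg h IHh]; intros x; simpl.
  - auto.
  - intros h1 h2. apply h1. apply IH. exact h2.
  - intros [d' [h1 h2]]. destruct (proj1 (L_dec x b d') h1) as [y [Ly [Uy Hy]]].
    exists y. split; [exact Uy|]. apply IH. apply (proj1 (sat_mono g d' y Hy)). exact h2.
  - intros [h1 h2]. split; auto.
Qed.

Lemma conj_list {X : Type} (m : mode) (xs : list X) (R : X -> D -> Prop) :
  (forall x, In x xs -> exists f, forall w, sat phi m w f <-> R x w) ->
  exists f, forall w, sat phi m w f <-> forall x, In x xs -> R x w.
Proof.
  induction xs as [|x xs IH]; intros H.
  - exists HTrue. intro w. simpl. split; auto. intros _ x [].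
  - destruct IH as [f Hf]. { intros; apply H; right; auto. }
    destruct (H x (or_introl eq_refl)) as [g Hg].
    exists (HAnd g f). intro w. simpl. rewrite Hg, Hf. split.
    + intros [h1 h2] y [<-|Hy]; auto.
    + intros h. split; auto.
Qed.

Hypothesis HAct : finite_type Act.

Definition bdec (P : Prop) : bool := if excluded_middle_informative P then true else false.
Lemma bdec_eq P Q : bdec P = bdec Q -> (P <-> Q).
Proof.
  unfold bdec. destruct (excluded_middle_informative P), (excluded_middle_informative Q);
    intro h; try discriminate; tauto.
Qed.

Fixpoint bools (k : nat) : list (list bool) :=
  match k with
  | O => [[]]
  | S k => map (cons true) (bools k) ++ map (cons false) (bools k)
  end.
Lemma bools_in bs : In bs (bools (length bs)).
Proof.
  induction bs as [|b bs IH]; simpl; auto.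
  apply in_or_app. destruct b; [left|right]; apply in_map; auto.
Qed.

Fixpoint lists {X : Type} (xs : list X) (k : nat) : list (list X) :=
  match k with
  | O => [[]]
  | S k => flat_map (fun y => map (cons y) (lists xs k)) xs
  end.
Lemma lists_in {X : Type} (xs ys : list X) : (forall y, In y ys -> In y xs) -> In ys (lists xs (length ys)).
Proof.
  induction ys as [|y ys IH]; intros H; simpl; auto.
  apply in_flat_map. exists y. split; [apply H; left; auto|]. apply in_map. apply IH. intros; apply H; right; auto.
Qed.

Lemma map_eq_in {X Y : Type} (f g : X -> Y) (l : list X) : map f l = map g l -> forall a, In a l -> f a = g a.
Proof.
  induction l as [|b l IH]; simpl; intros H a Ha; [destruct Ha|].
  injection H as h1 h2. destruct Ha as [<-|Ha]; auto.
Qed.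

Lemma fin_image {C : Type} (code : D -> C) (cs : list C) (g : D -> D) :
  (forall x, In (code x) cs) -> (forall x y, code x = code y -> g x = g y) ->
  exists l, forall x, In (g x) l.
Proof.
  intros H1 H2.
  assert (forall cs, exists l, forall x, In (code x) cs -> In (g x) l) as H.
  { induction cs0 as [|c cs0 [l Hl]].
    - exists []. intros x [].
    - destruct (classic (exists x0, code x0 = c)) as [[x0 Hx0]|Hno].
      + exists (g x0 :: l). intros x [Hx|Hx].
        * left. apply H2. congruence.
        * right; auto.
      + exists l. intros x [Hx|Hx]; auto. exfalso; eauto. }
  destruct (H cs) as [l Hl]. exists l. auto.
Qed.

Lemma Psi_le_sets n x y :
  (forall a e, ((exists l, L x a l /\ pi n l = e) -> (exists l, L y a l /\ pi n l = e)) /\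
               ((exists u, U y a u /\ pi n u = e) -> (exists u, U x a u /\ pi n u = e))) ->
  le (Psi (pi n) x) (Psi (pi n) y).
Proof.
  intro H. apply le_phi. intro a. rewrite !L_Psi, !U_Psi; try apply pi_cont. split.
  - apply sclomono. intros z [l [Ll Hz]].
    destruct (proj1 (H a (pi n l)) (ex_intro _ l (conj Ll eq_refl))) as [l' [Ll' He]].
    exists l'. split; auto. rewrite He. auto.
  - intros z [u [Uu Hz]].
    destruct (proj2 (H a (pi n u)) (ex_intro _ u (conj Uu eq_refl))) as [u' [Uu' He]].
    exists u'. split; auto. rewrite He. auto.
Qed.

Lemma pi_char n : (exists ln, forall x, In (pi n x) ln) /\
  forall x, exists f, forall w, sat phi ModeA w f <-> le (pi n x) w.
Proof.
  destruct HAct as [la Hla].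
  induction n as [|n [[ln Hln] IHc]].
  - split.
    + exists [botD]. intros x. left; auto.
    + intro x. exists HTrue. intro w. simpl. split; auto. intros _. apply botD_le.
  - split.
    + set (P1 := fun x a e => exists l, L x a l /\ pi n l = e).
      set (P2 := fun x a e => exists u, U x a u /\ pi n u = e).
      set (code := fun x => map (fun a => (map (fun e => bdec (P1 x a e)) ln,
                                        map (fun e => bdec (P2 x a e)) ln)) la).
      apply (fin_image code (lists (list_prod (bools (length ln)) (bools (length ln))) (length la))).
      * intro x. unfold code. rewrite <- (length_map (fun a => (map (fun e => bdec (P1 x a e)) ln,
                                        map (fun e => bdec (P2 x a e)) ln)) la).
        apply lists_in. intros [b1 b2] Hb. apply in_map_iff in Hb. destruct Hb as [a [Heq _]].
        injection Heq as <- <-. apply in_prod.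
        -- rewrite <- (length_map (fun e => bdec (P1 x a e)) ln). apply bools_in.
        -- rewrite <- (length_map (fun e => bdec (P2 x a e)) ln). apply bools_in.
      * intros x y Hc. unfold code in Hc.
        assert (Hiff : forall a e, In e ln -> (P1 x a e <-> P1 y a e) /\ (P2 x a e <-> P2 y a e)).
        { intros a e He. assert (Ha := map_eq_in _ _ la Hc a (Hla a)). injection Ha as h1 h2.
          split; apply bdec_eq; [apply (map_eq_in _ _ ln h1)|apply (map_eq_in _ _ ln h2)]; auto. }
        simpl. apply lanti; apply Psi_le_sets; intros a e; split;
          intros [l [Hl <-]]; apply (Hiff a (pi n l) (Hln l)); exists l; auto.
    + intro x.
      assert (Hpart : forall a, exists f, forall w, sat phi ModeA w f <->
          ((forall l, L x a l -> L w a (pi n l)) /\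
           (forall z, U w a z -> exists u, U x a u /\ le (pi n u) z))).
      { intro a.
        destruct (conj_list ModeA ln (fun e w => (exists l, L x a l /\ pi n l = e) -> L w a e)) as [f1 Hf1].
        { intros e He. destruct (classic (exists l, L x a l /\ pi n l = e)) as [Hc|Hc].
          - destruct Hc as [l [Ll <-]]. destruct (IHc l) as [g Hg].
            exists (HDia a g). intro w. simpl. split.
            + intros [d' [h1 h2]] _. eapply L_down; eauto. apply Hg; auto.
            + intro h. exists (pi n l). split; [apply h; eauto|]. apply Hg. apply lrefl.
          - exists HTrue. intro w. simpl. split; intros; try exact I; exfalso; auto. }
        destruct (conj_list ModeC ln (fun e u => (exists u', U x a u' /\ pi n u' = e) -> ~ le e u)) as [f2 Hf2].
        { intros e He. destruct (classic (exists u', U x a u' /\ pi n u' = e)) as [Hc|Hc].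
          - destruct Hc as [u' [Uu' <-]]. destruct (IHc u') as [g Hg].
            exists (HNeg g). intro w. simpl. rewrite Hg. split; [intros h _; exact h| intro h; apply h; eauto].
          - exists HTrue. intro w. simpl. split; intros; try exact I; exfalso; auto. }
        exists (HAnd f1 (HNeg (HDia a f2))). intro w. simpl. rewrite Hf1. split.
        - intros [h1 h2]. split.
          + intros l Ll. apply h1; eauto.
          + intros z Uz. apply NNPP. intro hn. apply h2. exists z. split; auto.
            apply Hf2. intros e _ [u' [Uu' <-]] hle. apply hn. eauto.
        - intros [h1 h2]. split.
          + intros e _ [l [Ll <-]]. auto.
          + intros [z [Uz Hz]]. destruct (h2 z Uz) as [u [Uu Hu]].
            apply (proj1 (Hf2 z) Hz (pi n u) (Hln u)); eauto. }
      destruct (conj_list ModeA la (fun a w => (forall l, L x a l -> L w a (pi n l)) /\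
           (forall z, U w a z -> exists u, U x a u /\ le (pi n u) z))) as [f Hf].
      { intros a _. apply Hpart. }
      exists f. intro w. rewrite Hf. simpl. rewrite le_phi. split.
      * intros H a. rewrite L_Psi, U_Psi; try apply pi_cont. destruct (H a (Hla a)) as [h1 h2]. split.
        -- apply (sclo_min D le). apply L_sc. intros z [l [Ll Hz]]. eapply L_down; eauto.
        -- auto.
      * intros H a _. destruct (H a) as [h1 h2]. rewrite L_Psi, U_Psi in *; try apply pi_cont. split.
        -- intros l Ll. apply h1. apply sclo_incl. exists l. split; auto. apply lrefl.
        -- auto.
Qed.

Theorem main_max (d : D) :
  (forall f : hml Act, sat phi ModeC d f -> sat phi ModeA d f) -> maximal le d.
Proof.
  intros H y Hdy.
  assert (Hn : forall n, le (pi n y) d).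
  { intro n. destruct (proj2 (pi_char n) y) as [f Hf]. apply Hf. apply H.
    apply (proj2 (sat_mono f d y Hdy)). apply sat_cons. apply Hf. apply pi_below. }
  apply lanti; auto.
  eapply ltrans; [apply le_fstar|]. apply (proj2 (fstar_lub y)). intros z [n ->]. auto.
Qed.

End Main.

Theorem lemma3p13 (Act : Type) (HAct : finite_type Act)
  (D : Type) (le : D -> D -> Prop) (phi : D -> Act -> mixed_pair D)
  (Hsol : initial_solution Act D le phi) (d : D) :
  (forall f : hml Act, sat phi ModeC d f -> sat phi ModeA d f) ->
  maximal le d.
Proof.
  intro H.
  destruct (classic (inhabited Act)) as [[a0]|Hna].
  - exact (main_max Act D le phi Hsol a0 HAct d H).
  - intros y Hdy. apply (lanti Act D le phi Hsol); auto.
    apply (proj2 (Hemb Act D le phi Hsol y d)). intro a. exfalso. apply Hna. constructor. exact a.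
Qed.
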